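(* Let $p$ be a prime, $F\in\{L^p,Z^p\}$, and let $G,G'$ be finite $p$-groups with $P_1^F(G)=P_1^F(G')$ and $P_2^F(G)=P_2^F(G')$. Then $|G|=|G'|$.
   Context: Lower $p$-central series: $L^p_1(G)=G$, $L^p_{i+1}(G)=[L^p_i(G),G](L^p_i(G))^p$. Upper $p$-central series: $Z^p_0(G)=1$, $Z^p_{i+1}(G)=$ the elements of order $\le p$ in the preimage in $G$ of $Z(G/Z^p_i(G))$ (for finite $p$-groups, the preimage of $\Omega_1(Z(G/Z^p_i(G)))$). Convention for the persistence matrix: for $F=L^p$ let $m$ be least with $L^p_{m+1}(G)=1$ and put $Q_k=G/L^p_{m+2-k}(G)$, $k=1,\dots,m$; for $F=Z^p$ let $m$ be least with $Z^p_m(G)=G$ and put $Q_k=G/Z^p_{k-1}(G)$, $k=1,\dots,m$. The degree-$n$ persistence matrix $P_n^F(G)=(p_{k,l})_{1\le k,l\le m}$ is upper triangular with $p_{k,l}$ ($k\le l$) equal to the $\mathbb F_p$-dimension of the image of the map $H_n(Q_k,\mathbb F_p)\to H_n(Q_l,\mathbb F_p)$ induced by the natural surjection, and $p_{k,l}=0$ for $k>l$. Equality of matrices includes equality of sizes. *)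

(* Defs.v *)
From HB Require Import structures.
From mathcomp Require Import all_boot all_order all_algebra all_fingroup all_solvable.
Set Implicit Arguments. Unset Strict Implicit. Unset Printing Implicit Defensive.
Import GRing.Theory.

Local Open Scope ring_scope.

Section BarComplex.
Variable p : nat.

(* n-chains of the (inhomogeneous) bar complex of the finite group gT
   (the whole type gT), with trivial coefficients in F_p:
   row vectors indexed by n-tuples of elements of gT. *)
Definition tup (gT : finGroupType) (n : nat) := {ffun 'I_n -> gT}.

(* k-th face map d_k : G^(n+1) -> G^n, k = 0..n+1:
   d_0 drops g_1, d_k (0<k<n+1) multiplies g_k g_(k+1), d_(n+1) drops g_(n+1). *)
Definition face (gT : finGroupType) (n k : nat) (f : tup gT n.+1) : tup gT n :=
  [ffun j : 'I_n => if (j.+1 < k)%N then f (inord j)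
                    else if j.+1 == k then (f (inord j) * f (inord j.+1))%g
                    else f (inord j.+1)].

(* boundary matrix d_(n+1) : C_(n+1) -> C_n (acting on row vectors) *)
Definition bd (gT : finGroupType) (n : nat) :
    'M['F_p]_(#|{: tup gT n.+1}|, #|{: tup gT n}|) :=
  \matrix_(i < #|{: tup gT n.+1}|)
     (\sum_(k < n.+2) ((-1) ^+ k) *: delta_mx 0 (enum_rank (face k (enum_val i)))).

Definition cycles (gT : finGroupType) (n : nat) : 'M['F_p]_(#|{: tup gT n}|) :=
  match n return 'M['F_p]_(#|{: tup gT n}|) with
  | 0 => 1%:M
  | m.+1 => kermx (bd gT m)
  end.

Definition mapmx (gT rT : finGroupType) (n : nat) (f : gT -> rT) :
    'M['F_p]_(#|{: tup gT n}|, #|{: tup rT n}|) :=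
  \matrix_(i < #|{: tup gT n}|) delta_mx 0 (enum_rank [ffun j => f (enum_val i j)]).

(* dim_F_p of the image of H_n(f) : H_n(gT, F_p) -> H_n(rT, F_p):
   dim (f_*(Z_n) + B_n') - dim B_n'. *)
Definition himg (gT rT : finGroupType) (n : nat) (f : gT -> rT) : nat :=
  (\rank (cycles gT n *m mapmx n f + bd rT n)%MS - \rank (bd rT n))%N.

End BarComplex.

Section PCentral.
Local Open Scope group_scope.
Variables (p : nat) (gT : finGroupType).

(* natural surjection G/N1 -> G/N2 (for N1 <= N2), on the groups G/Ni viewed as
   finite group types subg_of (G/Ni). *)
Definition qmap (G N1 N2 : {group gT}) :
    subg_of (G / N1)%G -> subg_of (G / N2)%G :=
  fun x => subg (G / N2)%G (coset N2 (repr (sgval x))).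

(* lpcs G i = L^p_(i+1)(G) *)
Fixpoint lpcs (G : {group gT}) (i : nat) : {group gT} :=
  if i is j.+1 then
    (<<[~: lpcs G j, G] :|: [set (x ^+ p)%g | x in lpcs G j]>>)%G
  else G.

(* upcs G i = Z^p_i(G) *)
Fixpoint upcs (G : {group gT}) (i : nat) : {group gT} :=
  if i is j.+1 then
    (coset (upcs G j) @*^-1
       <<[set x in 'Z(G / upcs G j) | (x ^+ p == 1)%g]>>)%G
  else 1%G.

(* least m with L^p_(m+1)(G) = 1 (search bounded by |G|, enough for p-groups) *)
Definition m_low (G : {group gT}) : nat :=
  find (fun i => lpcs G i :==: 1%g) (iota 0 #|G|.+1).

(* least m with Z^p_m(G) = G *)
Definition m_up (G : {group gT}) : nat :=
  find (fun i => upcs G i :==: G) (iota 0 #|G|.+1).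

(* persistence matrix with rows/columns indexed 0..m-1 (k0 = k-1),
   N k0 the normal subgroup with Q_(k0+1) = G / N k0 *)
Definition pmat (n : nat) (G : {group gT}) (m : nat) (N : nat -> {group gT}) :
    seq (seq nat) :=
  mkseq (fun k => mkseq (fun l =>
     if (k <= l)%N then himg p n (@qmap G (N k) (N l)) else 0%N) m) m.

End PCentral.

Inductive pcseries := Lower | Upper.

Definition persistence (p : nat) (F : pcseries) (n : nat) (gT : finGroupType)
    (G : {group gT}) : seq (seq nat) :=
  match F with
  | Lower => let m := m_low p G in
             (* Q_k = G / L^p_(m+2-k), k = k0+1 *)
             pmat p n G m (fun k0 => lpcs p G (m - k0))
  | Upper => (* Q_k = G / Z^p_(k-1), k = k0+1 *)
             pmat p n G (m_up p G) (fun k0 => upcs p G k0)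
  end.

(* Main.v *)
Require Import Defs.
From HB Require Import structures.
From mathcomp Require Import all_boot all_order all_algebra all_fingroup all_solvable.
From mathcomp Require Import mxabelem.
From Stdlib Require Import Lia.

Module PA.
Set Implicit Arguments. Unset Strict Implicit. Unset Printing Implicit Defensive.
Import GRing.Theory.
Local Open Scope ring_scope.

Ltac nlia := repeat match goal with H : is_true (leq _ _) |- _ => move/leP: H => H end;
  unfold addn, subn, muln, addn_rec, subn_rec, muln_rec in *; lia.

Lemma rkE (F : fieldType) m1 m2 n (A : 'M[F]_(m1, n)) (B : 'M_(m2, n)) :
  (A <= B)%MS -> (B <= A)%MS -> \rank A = \rank B.
Proof. by move=> h1 h2; apply: eqmx_rank; rewrite h1 h2. Qed.

Lemma rank_full (F : fieldType) m n (A : 'M[F]_(m, n)) :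
  (1%:M <= A)%MS -> \rank A = n.
Proof. by rewrite sub1mx => /eqP. Qed.

Lemma LA_main (F : fieldType) c0 c1 c2 c3 b1 b2 b3
 (d1 : 'M[F]_(c1,c0)) (d2 : 'M_(c2,c1)) (d3 : 'M_(c3,c2))
 (e2 : 'M[F]_(b2,b1)) (e3 : 'M_(b3,b2))
 (f1 : 'M_(c1,b1)) (f2 : 'M_(c2,b2)) (f3 : 'M_(c3,b3)) :
 d1 = 0 -> d3 *m d2 = 0 -> d2 *m f1 = f2 *m e2 -> d3 *m f2 = f3 *m e3 ->
 row_full f1 -> row_full f2 -> row_full f3 ->
 ((\rank (kermx e2 *m 1%:M + e3)%MS - \rank e3) - (\rank (kermx d2 *m f2 + e3)%MS - \rank e3)
  + ((\rank (kermx d1 *m 1%:M + d2)%MS - \rank d2) - (\rank (kermx d1 *m f1 + e2)%MS - \rank e2)))%N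
  = (\rank (kermx f1) - \rank (kermx f2 *m d2))%N.
Proof.
move=> d10 d32 c21 c32 ff1 ff2 ff3.
set K1 := kermx f1; set K2 := kermx f2; set P := kermx (d2 *m f1); set Z2 := kermx d2.
have e3E : \rank e3 = \rank (d3 *m f2) by rewrite c32 (eqmxMfull e3 ff3).1.
have e3S : forall m (X : 'M_(m, c2)), (d3 <= X)%MS -> (e3 <= X *m f2)%MS.
  move=> m X dX; have [E3 hE3]:= row_fullP ff3.
  rewrite -[e3]mul1mx -hE3 -mulmxA -c32 mulmxA; exact: submxMr (submx_trans (submxMl _ _) dX).
have d3P : (d3 <= P)%MS by rewrite /P sub_kermx mulmxA d32 mul0mx.
have d3Z : (d3 <= Z2)%MS by rewrite /Z2 sub_kermx d32.
have K2P : (K2 <= P)%MS by rewrite /P sub_kermx c21 mulmxA mulmx_ker mul0mx.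
have Z2P : (Z2 <= P)%MS by rewrite /P sub_kermx mulmxA mulmx_ker mul0mx.
have K2dK1 : (K2 *m d2 <= K1)%MS by rewrite /K1 sub_kermx -mulmxA c21 mulmxA mulmx_ker mul0mx.
have H1 : \rank (kermx e2 *m 1%:M + e3)%MS = \rank (P *m f2).
  apply: rkE.
    rewrite addsmx_sub e3S // mulmx1 andbT.
    have [S2 hS2] := row_fullP ff2.
    rewrite -[kermx e2]mulmx1 -hS2 mulmxA submxMr //.
    by rewrite /P sub_kermx -mulmxA c21 !mulmxA -(mulmxA _ S2) hS2 mulmx1 mulmx_ker.
  apply: submx_trans (addsmxSl _ _); rewrite mulmx1 sub_kermx -mulmxA -c21.
  by rewrite /P mulmx_ker.
have H3 : \rank (kermx d2 *m f2 + e3)%MS = \rank (Z2 *m f2).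
  by apply: rkE; rewrite ?addsmxSl // addsmx_sub submx_refl e3S.
have H4 : (\rank (P *m f2) + \rank K2)%N = \rank P.
  rewrite -(mxrank_mul_ker P f2); congr (_ + _)%N.
  by apply: rkE; rewrite ?capmxSr // sub_capmx K2P submx_refl.
have H5 := mxrank_mul_ker Z2 f2.
have H6 := mxrank_mul_ker K2 d2.
have H6' : \rank (K2 :&: kermx d2)%MS = \rank (Z2 :&: K2)%MS by rewrite capmxC.
have H7 : \rank P = (c2 - \rank (d2 *m f1))%N by rewrite mxrank_ker.
have H7' : \rank Z2 = (c2 - \rank d2)%N by rewrite mxrank_ker.
have H7a := rank_leq_row (d2 *m f1).
have H7b := rank_leq_row d2.
have H7c := rank_leq_col d2.
have H7d := rank_leq_col e2.
have H8 : \rank (d2 *m f1) = \rank e2 by rewrite c21 (eqmxMfull e2 ff2).1.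
have H9 : \rank (kermx d1 *m 1%:M + d2)%MS = c1.
  apply: rank_full; apply: submx_trans (addsmxSl _ _).
  by rewrite mulmx1 d10 kermx0 submx_refl.
have H10 : \rank (kermx d1 *m f1 + e2)%MS = b1.
  apply: rank_full; apply: submx_trans (addsmxSl _ _).
  have ff1' : (1%:M <= f1)%MS by rewrite sub1mx. apply: submx_trans ff1' _.
  by rewrite -{1}[f1]mul1mx submxMr // d10 kermx0 submx_refl.
have H11 : \rank f1 = b1 by move/eqP: ff1.
have H11' : \rank K1 = (c1 - \rank f1)%N by rewrite mxrank_ker.
have H11a := rank_leq_row f1.
have H12 := mxrank_mul_ker d2 f1.
have H12' : (\rank (d2 :&: kermx f1)%MS <= \rank K1)%N by rewrite mxrankS ?capmxSr.
have H13 : (\rank (K2 *m d2) <= \rank K1)%N by rewrite mxrankS.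
have H14 : (\rank (d3 *m f2) <= \rank (Z2 *m f2))%N by rewrite mxrankS ?submxMr.
have H15 : (\rank (Z2 *m f2) <= \rank (P *m f2))%N by rewrite mxrankS ?submxMr.
rewrite H1 H3 H9 H10 e3E; rewrite -/K1 -/K2 -/Z2 in H5 H6 H6' H12 H12' *.
move: H4 H5 H6 H6' H7 H7' H7a H7b H7c H7d H8 H11 H11' H11a H12 H12' H13 H14 H15.
set a1 := \rank (P *m f2); set a2 := \rank (Z2 *m f2); set a3 := \rank (d3 *m f2).
move=> *. repeat match goal with H : is_true (leq _ _) |- _ => move/leP: H => H end. unfold addn, subn, addn_rec, subn_rec in *. lia.
Qed.
Section Bar.
Variable p : nat.
Local Notation F := 'F_p.

Definition ev (gT : finGroupType) n (t : tup gT n) : 'rV[F]_(#|{: tup gT n}|) :=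
  delta_mx 0 (enum_rank t).

Definition fmap (gT rT : finGroupType) n (f : gT -> rT) (t : tup gT n) : tup rT n :=
  [ffun j => f (t j)].

Lemma ev_mapmx (gT rT : finGroupType) n (f : gT -> rT) (t : tup gT n) :
  ev t *m mapmx p n f = ev (fmap f t).
Proof. by rewrite /ev -rowE /mapmx rowK enum_rankK. Qed.

Lemma ev_bd (gT : finGroupType) n (t : tup gT n.+1) :
  ev t *m bd p gT n = \sum_(k < n.+2) ((-1) ^+ k) *: ev (face k t).
Proof. by rewrite /ev -rowE /bd rowK enum_rankK. Qed.

Lemma mx_ev_eq (gT : finGroupType) n m (A B : 'M[F]_(#|{: tup gT n}|, m)) :
  (forall t, ev t *m A = ev t *m B) -> A = B.
Proof.
move=> h; apply/row_matrixP => i; rewrite !rowE.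
by have := h (enum_val i); rewrite /ev enum_valK.
Qed.

Lemma mapmx_comp (gT rT sT : finGroupType) n (f : gT -> rT) (g : rT -> sT) :
  mapmx p n f *m mapmx p n g = mapmx p n (g \o f).
Proof.
apply: mx_ev_eq => t; rewrite mulmxA !ev_mapmx; congr ev.
by apply/ffunP => j; rewrite !ffunE.
Qed.

Lemma mapmx_id (gT : finGroupType) n (f : gT -> gT) :
  f =1 id -> mapmx p n f = 1%:M.
Proof.
move=> fid; apply: mx_ev_eq => t; rewrite ev_mapmx mulmx1; congr ev.
by apply/ffunP => j; rewrite !ffunE fid.
Qed.

Lemma mapmx_full (gT rT : finGroupType) n (f : gT -> rT) (s : rT -> gT) :
  cancel s f -> row_full (mapmx p n f).
Proof.
move=> sK; apply/row_fullP; exists (mapmx p n s).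
by rewrite mapmx_comp; apply: mapmx_id.
Qed.

Lemma face_fmap (gT rT : finGroupType) n k (f : gT -> rT) (t : tup gT n.+1) :
  {morph f : x y / (x * y)%g} -> fmap f (face k t) = face k (fmap f t).
Proof.
move=> fM; apply/ffunP => j; rewrite !ffunE.
by case: ifP => _ //; case: ifP => _ //; rewrite fM.
Qed.

Lemma bd_mapmx (gT rT : finGroupType) n (f : gT -> rT) :
  {morph f : x y / (x * y)%g} ->
  bd p gT n *m mapmx p n f = mapmx p n.+1 f *m bd p rT n.
Proof.
move=> fM; apply: mx_ev_eq => t; rewrite !mulmxA ev_mapmx ev_bd ev_bd mulmx_suml.
apply: eq_bigr => k _; rewrite -scalemxAl ev_mapmx face_fmap //.
Qed.

Lemma bd0 (gT : finGroupType) : bd p gT 0 = 0.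
Proof.
apply: mx_ev_eq => t; rewrite ev_bd mulmx0 big_ord_recl big_ord1 /=.
have -> : face 1 t = face 0 t by apply/ffunP => -[].
by rewrite expr1 scaleN1r expr0 scale1r subrr.
Qed.

End Bar.

Section Bar2.
Variable p : nat.
Local Notation F := 'F_p.
Variable gT : finGroupType.

Definition mk1 (x : gT) : tup gT 1 := [ffun _ => x].
Definition mk2 (x y : gT) : tup gT 2 := [ffun j => if val j == 0%N then x else y].
Definition mk3 (x y z : gT) : tup gT 3 :=
  [ffun j => if val j == 0%N then x else if val j == 1%N then y else z].

Lemma mk1E (t : tup gT 1) : t = mk1 (t ord0).
Proof. by apply/ffunP => j; rewrite ffunE ord1. Qed.
Lemma mk2E (t : tup gT 2) : t = mk2 (t ord0) (t ord_max).
Proof.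
apply/ffunP => j; rewrite ffunE; case: j => [[|[|//]]] Hj /=; congr (t _); exact: val_inj.
Qed.
Lemma mk3E (t : tup gT 3) : t = mk3 (t ord0) (t (inord 1)) (t ord_max).
Proof.
apply/ffunP => j; rewrite ffunE; case: j => [[|[|[|//]]]] Hj /=; congr (t _); apply: val_inj => //=.
by rewrite inordK.
Qed.

Lemma face2_0 x y : face 0 (mk2 x y) = mk1 y.
Proof. by apply/ffunP => j; rewrite !ffunE ord1 /= inordK. Qed.
Lemma face2_1 x y : face 1 (mk2 x y) = mk1 (x * y)%g.
Proof. by apply/ffunP => j; rewrite !ffunE ord1 /= !inordK. Qed.
Lemma face2_2 x y : face 2 (mk2 x y) = mk1 x.
Proof. by apply/ffunP => j; rewrite !ffunE ord1 /= !inordK. Qed.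

Lemma face3_0 a b c : face 0 (mk3 a b c) = mk2 b c.
Proof. by apply/ffunP => j; rewrite !ffunE; case: j => [[|[|//]]] Hj /=; rewrite !inordK. Qed.
Lemma face3_1 a b c : face 1 (mk3 a b c) = mk2 (a * b)%g c.
Proof. by apply/ffunP => j; rewrite !ffunE; case: j => [[|[|//]]] Hj /=; rewrite !inordK. Qed.
Lemma face3_2 a b c : face 2 (mk3 a b c) = mk2 a (b * c)%g.
Proof. by apply/ffunP => j; rewrite !ffunE; case: j => [[|[|//]]] Hj /=; rewrite !inordK. Qed.
Lemma face3_3 a b c : face 3 (mk3 a b c) = mk2 a b.
Proof. by apply/ffunP => j; rewrite !ffunE; case: j => [[|[|//]]] Hj /=; rewrite !inordK. Qed.

Lemma ev_bd2 x y : ev p (mk2 x y) *m bd p gT 1 =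
  ev p (mk1 y) - ev p (mk1 (x * y)%g) + ev p (mk1 x).
Proof.
rewrite ev_bd !big_ord_recr big_ord0 /= add0r face2_0 face2_1 face2_2.
by rewrite expr0 expr1 scale1r scaleN1r sqrrN expr1n scale1r.
Qed.

Lemma cancel12 (V : zmodType) (a b c ab bc abc : V) :
  (c - bc + b) - (c - abc + ab) + (bc - abc + a) - (b - ab + a) = 0.
Proof.
rewrite !opprD !opprK !addrA.
rewrite (ACl ((1*4)*(3*10)*(9*12)*(7*2)*(5*8)*(11*6))%AC) /=.
by rewrite !subrr !addr0.
Qed.

Lemma bdbd : bd p gT 2 *m bd p gT 1 = 0.
Proof.
apply: mx_ev_eq => t; rewrite mulmx0 mulmxA ev_bd mulmx_suml.
rewrite !big_ord_recr big_ord0 /= add0r (mk3E t).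
set a := t ord0; set b := t (inord 1); set c := t ord_max.
rewrite -!scalemxAl face3_0 face3_1 face3_2 face3_3 !ev_bd2 -mulgA.
rewrite expr0 expr1 scale1r !scaleN1r sqrrN expr1n scale1r.
rewrite exprS expr2 mulN1r mulrN1 opprK scaleN1r.
exact: cancel12.
Qed.

End Bar2.

Lemma himg_formula p (Q R : finGroupType) (f : Q -> R) (s : R -> Q) (hQ : Q -> Q) (hR : R -> R) :
  {morph f : x y / (x * y)%g} -> cancel s f -> hQ =1 id -> hR =1 id ->
  (himg p 2 hR - himg p 2 f + (himg p 1 hQ - himg p 1 f))%N =
  (\rank (kermx (mapmx p 1 f)) - \rank (kermx (mapmx p 2 f) *m bd p Q 1))%N.
Proof.
move=> fM sK hQid hRid; rewrite /himg /= !mapmx_id //.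
apply: LA_main.
- exact: bd0.
- exact: bdbd.
- exact: bd_mapmx.
- exact: bd_mapmx.
- exact: mapmx_full sK.
- exact: mapmx_full sK.
- exact: mapmx_full sK.
Qed.

End PA.
Import PA.

Module PK.
Set Implicit Arguments. Unset Strict Implicit. Unset Printing Implicit Defensive.
Import GRing.Theory.
Local Open Scope ring_scope.

Section Kern.
Variables (p : nat) (Q R : finGroupType) (f : Q -> R) (s : R -> Q).
Hypotheses (pp : prime p) (fM : {morph f : x y / (x * y)%g}) (sK : cancel s f).
Hypotheses (Mcent : forall x y, f x = 1%g -> commute x y)
           (Mexp : forall x, f x = 1%g -> (x ^+ p = 1)%g).

Definition fm : {morphism [set: Q] >-> R} := Morphism (in2W fM).
Local Notation M := ('ker fm)%G.

Lemma inM x : (x \in M) = (f x == 1%g).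
Proof. by apply/idP/eqP => [/mker //|]; move/(kerP fm (in_setT x)). Qed.

Lemma f1 : f 1%g = 1%g. Proof. exact: (morph1 fm). Qed.
Lemma fV x : f x^-1%g = (f x)^-1%g. Proof. exact: (morphV fm (in_setT x)). Qed.

Lemma abelM : (p.-abelem M)%g.
Proof.
apply/(abelemP pp); split.
  by apply/centsP => x; rewrite inM => /eqP fx y _; apply: Mcent.
by move=> x; rewrite inM => /eqP; apply: Mexp.
Qed.

Local Notation c1 := #|{: tup Q 1}|.
Local Notation phi1 := (mapmx p 1 f).
Local Notation phi2 := (mapmx p 2 f).
Local Notation d2 := (bd p Q 1).
Local Notation W := (kermx phi2 *m d2).
Local Notation K1 := (kermx phi1).

Lemma fmap_mk1g (rT : finGroupType) (g : Q -> rT) x : fmap g (mk1 x) = mk1 (g x).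
Proof. by apply/ffunP => j; rewrite !ffunE. Qed.
Lemma fmap_mk1gR (g : R -> Q) x : fmap g (mk1 x) = mk1 (g x).
Proof. by apply/ffunP => j; rewrite !ffunE. Qed.
Lemma fmap_mk1 x : fmap f (mk1 x) = mk1 (f x).
Proof. by apply/ffunP => j; rewrite !ffunE. Qed.
Lemma fmap_mk2 x y : fmap f (mk2 x y) = mk2 (f x) (f y).
Proof. by apply/ffunP => j; rewrite !ffunE; case: ifP. Qed.

Lemma W_K1 : (W <= K1)%MS.
Proof.
by rewrite sub_kermx -mulmxA bd_mapmx // mulmxA mulmx_ker mul0mx.
Qed.

Lemma trivial_case : (M :=: 1)%g -> \rank K1 = 0%N.
Proof.
move=> M1; apply/eqP; rewrite mxrank_eq0 kermx_eq0; apply/row_freeP.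
exists (mapmx p 1 s); rewrite mapmx_comp; apply: mapmx_id => x /=.
have : ((s (f x))^-1 * x)%g \in M by rewrite inM fM fV sK mulVg.
by rewrite M1 inE => /eqP/(canRL (mulKVg _)); rewrite mulg1.
Qed.


Section NT.
Hypothesis ntM : (M != 1 :> {set Q})%g.
Local Notation rv := (abelem_rV abelM ntM).
Local Notation vr := (rVabelem abelM ntM).
Local Notation n := ('dim M)%g.

Definition sg x := s (f x).
Definition mm x := ((sg x)^-1 * x)%g.

Lemma mmM x : mm x \in M.
Proof. by rewrite inM /mm fM fV /sg sK mulVg. Qed.

Lemma rvM x y : x \in M -> y \in M -> rv (x * y)%g = rv x + rv y.
Proof. by move=> Mx My; rewrite (abelem_rV_M abelM ntM Mx My). Qed.
Lemma rvV x : x \in M -> rv (x^-1)%g = - rv x.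
Proof. by move=> Mx; rewrite (abelem_rV_V abelM ntM Mx). Qed.

Definition psi : 'M['F_p]_(c1, n) := \matrix_(i < c1) rv (mm (enum_val i ord0)).

Lemma ev_psi x : ev p (mk1 x) *m psi = rv (mm x).
Proof. by rewrite /ev -rowE /psi rowK enum_rankK ffunE. Qed.

Definition cc (u v : R) := ((s u * s v)^-1 * s (u * v))%g.

Definition Tm : 'M['F_p]_(#|{: tup R 2}|, n) :=
  \matrix_(i < #|{: tup R 2}|) rv (cc (enum_val i ord0) (enum_val i ord_max)).

Lemma mm_cc a b : (mm a * mm b * (mm (a * b))^-1)%g = cc (f a) (f b).
Proof.
rewrite /cc /mm /sg fM.
set A := s (f a); set B := s (f b); set C := s (f a * f b).
set ma := (A^-1 * a)%g; set mb := (B^-1 * b)%g.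
have ea : a = (A * ma)%g by rewrite /ma mulKVg.
have eb : b = (B * mb)%g by rewrite /mb mulKVg.
have cma : commute ma B by apply: Mcent; move: (mmM a); rewrite inM => /eqP.
have eab : (a * b = (A * B) * (ma * mb))%g.
  by rewrite {1}ea {1}eb mulgA -(mulgA A) cma !mulgA.
rewrite invMg invgK eab (invMg (A * B)%g) !mulgA.
by rewrite mulgV mul1g.
Qed.

Lemma d2_psi : d2 *m psi = phi2 *m Tm.
Proof.
apply: mx_ev_eq => t; rewrite (mk2E t) !mulmxA ev_bd2 ev_mapmx fmap_mk2.
set a := t ord0; set b := t ord_max.
rewrite mulmxDl mulmxBl !ev_psi /ev -rowE /Tm rowK enum_rankK !ffunE /=.
have Ma := mmM a; have Mb := mmM b; have Mab := mmM (a * b)%g.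
rewrite -mm_cc (rvM (groupM Ma Mb) (_ : _ \in M)) ?groupV //.
rewrite (rvM Ma Mb) (rvV Mab).
by rewrite addrC addrA.
Qed.

Lemma W_psi : W *m psi = 0.
Proof. by rewrite -mulmxA d2_psi mulmxA mulmx_ker mul0mx. Qed.

Definition u (m : Q) := ev p (mk1 m) - ev p (mk1 1%g).

Lemma u_K1 m : m \in M -> (u m <= K1)%MS.
Proof.
rewrite inM => /eqP fm1.
by rewrite sub_kermx mulmxBl !ev_mapmx !fmap_mk1 fm1 f1 subrr.
Qed.

Lemma u_psi m : m \in M -> u m *m psi = rv m.
Proof.
move=> Mm; rewrite mulmxBl !ev_psi /mm /sg mulg1.
have /eqP fm1 : f m == 1%g by rewrite -inM.
have Ms : ((s 1)^-1)%g \in M by rewrite inM fV sK invg1.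
by rewrite fm1 rvM // f1 [X in X - _]addrC addrK.
Qed.

Lemma full_psi : \rank (K1 *m psi) = n.
Proof.
apply: rank_full; apply/row_subP => i; rewrite row1.
rewrite -(rVabelemK abelM ntM (delta_mx 0 i)) -u_psi ?mem_rVabelem //.
by rewrite submxMr // u_K1 // mem_rVabelem.
Qed.

Definition cg (a b : 'rV['F_p]_c1) := (a - b <= W)%MS.

Lemma cg_refl a : cg a a.
Proof. by rewrite /cg subrr sub0mx. Qed.
Lemma cg_sym a b : cg a b -> cg b a.
Proof. by rewrite /cg => h; rewrite -opprB -scaleN1r scalemx_sub. Qed.
Lemma cg_trans a b c : cg a b -> cg b c -> cg a c.
Proof.
rewrite /cg => h1 h2; have -> : a - c = (a - b) + (b - c) by rewrite addrA subrK.
exact: addmx_sub.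
Qed.
Lemma cg_add a b a' b' : cg a b -> cg a' b' -> cg (a + a') (b + b').
Proof. by rewrite /cg opprD addrACA => h1 h2; apply: addmx_sub. Qed.
Lemma cg_scale c a b : cg a b -> cg (c *: a) (c *: b).
Proof. by rewrite /cg -scalerBr; apply: scalemx_sub. Qed.
Lemma cg_sub a b : cg a b -> (b <= W)%MS -> (a <= W)%MS.
Proof. by rewrite /cg => h1 h2; rewrite -(subrK b a) addmx_sub. Qed.

Lemma zid1 (V : zmodType) (x g m o : V) :
  (x - g) - (m - o) = - ((m - x + g) - (o - g + g)).
Proof. by rewrite subrK !opprB !opprD !opprK !addrA [LHS](ACl (3*4*1*2))%AC. Qed.

Lemma step2 x : cg (ev p (mk1 x) - ev p (mk1 (sg x))) (u (mm x)).
Proof.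
set y := ev p (mk2 (sg x) (mm x)) - ev p (mk2 (sg x) 1%g).
have /eqP fmx : f (mm x) == 1%g by rewrite -inM mmM.
have yK : (y <= kermx phi2)%MS.
  by rewrite sub_kermx mulmxBl !ev_mapmx !fmap_mk2 fmx f1 subrr.
have := submxMr d2 yK; rewrite /y mulmxBl !ev_bd2 mulg1 /mm mulKVg -/(mm x).
rewrite /cg /u zid1 => h; rewrite -scaleN1r; exact: scalemx_sub.
Qed.

Lemma zid2 (V : zmodType) (m m' mm o : V) :
  (m - o + (m' - o)) - (mm - o) = (m' - mm + m) - (o - o + o).
Proof.
by rewrite subrr add0r !opprB !addrA subrK [LHS](ACl (3*4*1*2))%AC.
Qed.

Lemma u_add m m' : m \in M -> m' \in M -> cg (u m + u m') (u (m * m')%g).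
Proof.
rewrite !inM => /eqP fm1 /eqP fm1'.
set y := ev p (mk2 m m') - ev p (mk2 1%g 1%g).
have yK : (y <= kermx phi2)%MS.
  by rewrite sub_kermx mulmxBl !ev_mapmx !fmap_mk2 fm1 fm1' f1 subrr.
have := submxMr d2 yK; rewrite /y mulmxBl !ev_bd2 mulg1.
by rewrite /cg /u zid2.
Qed.

Definition w (v : 'rV['F_p]_n) := u (vr v).

Lemma w0 : w 0 = 0.
Proof. by rewrite /w rVabelem0 /u subrr. Qed.

Lemma w_add a b : cg (w a + w b) (w (a + b)).
Proof. by rewrite /w rVabelemD; apply: u_add; apply: mem_rVabelem. Qed.

Lemma w_nat a k : cg (w a *+ k) (w (a *+ k)).
Proof.
elim: k => [|k IH]; first by rewrite !mulr0n w0; apply: cg_refl.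
rewrite !mulrS; apply: cg_trans (w_add _ _); apply: cg_add IH; exact: cg_refl.
Qed.

Lemma w_scale (c : 'F_p) a : cg (c *: w a) (w (c *: a)).
Proof. by rewrite -[c]natr_Zp !scaler_nat; apply: w_nat. Qed.

Lemma w_sum (I : finType) (k : I -> 'F_p) (v : I -> 'rV['F_p]_n) :
  cg (\sum_i k i *: w (v i)) (w (\sum_i k i *: v i)).
Proof.
apply: (big_ind2 (fun a b => cg a (w b))).
- by rewrite w0; apply: cg_refl.
- by move=> x1 x2 y1 y2 h1 h2; apply: cg_trans (cg_add h1 h2) (w_add _ _).
- by move=> i _; apply: w_scale.
Qed.

Lemma cg_sum (I : finType) (k : I -> 'F_p) (a b : I -> 'rV['F_p]_c1) :
  (forall i, cg (a i) (b i)) -> cg (\sum_i k i *: a i) (\sum_i k i *: b i).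
Proof.
move=> h; apply: (big_ind2 cg); first exact: cg_refl.
  by move=> *; apply: cg_add.
by move=> i _; apply: cg_scale.
Qed.

Lemma ej j : delta_mx 0 j = ev p (mk1 (enum_val j ord0)) :> 'rV['F_p]_c1.
Proof. by rewrite /ev -mk1E enum_valK. Qed.

Lemma capW : (K1 :&: kermx psi <= W)%MS.
Proof.
apply/row_subP => i; set k := row i _.
have hk : (k <= K1 :&: kermx psi)%MS := row_sub i _.
have kf : k *m phi1 = 0 by apply/eqP; rewrite -sub_kermx (submx_trans hk) ?capmxSl.
have kp : k *m psi = 0 by apply/eqP; rewrite -sub_kermx (submx_trans hk) ?capmxSr.
pose xs (j : 'I_c1) := enum_val j ord0.
have E1 : k = \sum_j k 0 j *: (ev p (mk1 (xs j)) - ev p (mk1 (sg (xs j)))).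
  have e j : ev p (mk1 (sg (xs j))) = delta_mx 0 j *m (phi1 *m mapmx p 1 s).
    by rewrite ej mulmxA !ev_mapmx fmap_mk1 fmap_mk1gR.
  under eq_bigr do rewrite e -ej scalerBr scalemxAl.
  by rewrite sumrB -mulmx_suml -row_sum_delta mulmxA kf mul0mx subr0.
have E2 : k *m psi = \sum_j k 0 j *: rv (mm (xs j)).
  rewrite {1}(row_sum_delta k) mulmx_suml; apply: eq_bigr => j _.
  by rewrite -scalemxAl ej ev_psi.
apply: (@cg_sub _ 0); last exact: sub0mx.
rewrite {1}E1; apply: cg_trans (cg_sum _ (fun j => step2 (xs j))) _.
have -> : \sum_j k 0 j *: u (mm (xs j)) = \sum_j k 0 j *: w (rv (mm (xs j))).
  by apply: eq_bigr => j _; rewrite /w abelem_rV_K // mmM.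
apply: cg_trans (w_sum _ _) _; rewrite -E2 kp w0; exact: cg_refl.
Qed.

Lemma rank_nt : (\rank K1 - \rank W)%N = n.
Proof.
have h := mxrank_mul_ker K1 psi.
have e : \rank (K1 :&: kermx psi)%MS = \rank W.
  apply: rkE; first exact: capW.
  rewrite sub_capmx W_K1 /=; apply/sub_kermxP; exact: W_psi.
by rewrite -h e full_psi addnK.
Qed.

End NT.

Lemma rank_K1_W : (\rank K1 - \rank W)%N = logn p #|M|.
Proof.
have [M1|ntM] := eqVneq (M :> {set Q}) 1%g.
  by rewrite trivial_case ?M1 ?cards1 ?logn1 //; apply/eqP; rewrite M1.
by rewrite (rank_nt ntM) (dim_abelemE abelM ntM).
Qed.

End Kern.

End PK.
Import PK.

Module PS.
Set Implicit Arguments. Unset Strict Implicit. Unset Printing Implicit Defensive.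
Import GRing.Theory.
Local Open Scope group_scope.

Lemma sgvalX (gT : finGroupType) (H : {group gT}) (x : subg_of H) n :
  sgval (x ^+ n) = sgval x ^+ n.
Proof. by elim: n => [|n IH] //; rewrite !expgS -IH. Qed.

Lemma card_morph_sect (Q R : finGroupType) (f : Q -> R) (s : R -> Q)
  (fM : {morph f : x y / x * y}) (sK : cancel s f) :
  #|Q| = (#|('ker (fm fM))%G| * #|R|)%N.
Proof.
have imT : fm fM @* [set: Q] = [set: R].
  apply/setP => y; rewrite inE; apply/morphimP; exists (s y) => //; by rewrite sK.
have := card_morphim (fm fM) [set: Q]; rewrite imT setIid cardsT => ->.
by rewrite -cardsT -(Lagrange (subsetT ('ker (fm fM))%G)).
Qed.

Lemma card_subgT (aT : finGroupType) (H : {group aT}) : #|{: subg_of H}| = #|H|.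
Proof. by rewrite card_sub; apply: eq_card => x; rewrite inE. Qed.

Section Step.
Variables (p : nat) (gT : finGroupType) (G N1 N2 : {group gT}).
Hypotheses (pp : prime p) (nN1 : N1 <| G) (nN2 : N2 <| G) (s12 : N1 \subset N2)
  (hR : [~: N2, G] \subset N1) (hP : forall x, x \in N2 -> x ^+ p \in N1).

Lemma nG1 : G \subset 'N(N1). Proof. by case/andP: nN1. Qed.
Lemma nG2 : G \subset 'N(N2). Proof. by case/andP: nN2. Qed.
Lemma sN2G : N2 \subset G. Proof. by case/andP: nN2. Qed.

Lemma cc2 (A B : {group gT}) g : A <| G -> B <| G -> A \subset B -> g \in G ->
  coset B (repr (coset A g)) = coset B g.
Proof.
move=> /andP[_ nA] /andP[_ nB] sAB Gg.
have := mem_repr_coset (coset A g); rewrite val_coset ?(subsetP nA) //.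
by case/rcosetP => a Aa ->; rewrite coset_kerl ?(subsetP sAB).
Qed.

Lemma repr_in (A : {group gT}) g : A <| G -> g \in G -> repr (coset A g) \in G.
Proof.
move=> /andP[sAG nA] Gg; have := mem_repr_coset (coset A g).
rewrite val_coset ?(subsetP nA) //; case/rcosetP => a Aa ->.
by rewrite groupM // (subsetP sAG).
Qed.

Lemma qsurj (A : {group gT}) (x : subg_of (G / A)) :
  exists2 g, g \in G & x = subg (G / A) (coset A g).
Proof.
have := subgP x; case/morphimP => g _ Gg e.
by exists g => //; rewrite -e sgvalK.
Qed.

Lemma qmapE (A B : {group gT}) g : A <| G -> B <| G -> A \subset B -> g \in G ->
  @qmap _ G A B (subg (G / A) (coset A g)) = subg (G / B) (coset B g).
Proof.
move=> nA nB sAB Gg; rewrite /qmap subgK ?mem_quotient //.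
by rewrite cc2.
Qed.

Lemma qmap_id (A : {group gT}) : A <| G -> @qmap _ G A A =1 id.
Proof.
move=> nA x; have [g Gg ->] := qsurj x; rewrite qmapE //.
Qed.

Local Notation f := (@qmap _ G N1 N2).

Lemma qM : {morph f : x y / x * y}.
Proof.
move=> x y; have [g Gg ->] := qsurj x; have [h Gh ->] := qsurj y.
have nN1g := subsetP nG1 _ Gg; have nN1h := subsetP nG1 _ Gh.
have nN2g := subsetP nG2 _ Gg; have nN2h := subsetP nG2 _ Gh.
have Ggh : g * h \in G by rewrite groupM.
rewrite -subgM ?mem_quotient // -morphM // qmapE // !qmapE //.
by rewrite -subgM ?mem_quotient // -morphM // groupM.
Qed.

Definition qs (y : subg_of (G / N2)) : subg_of (G / N1) :=
  subg (G / N1) (coset N1 (repr (sgval y))).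

Lemma qsK : cancel qs f.
Proof.
move=> y; have [h Gh ->] := qsurj y; rewrite /qs subgK ?mem_quotient //.
by rewrite qmapE ?repr_in // coset_reprK.
Qed.

Lemma qker_elt x : f x = 1 -> exists2 g, g \in N2 & x = subg (G / N1) (coset N1 g).
Proof.
have [g Gg ->] := qsurj x; rewrite qmapE // => /(congr1 sgval).
rewrite subgK ?mem_quotient // => /coset_idr h.
by exists g => //; apply: h; apply: (subsetP nG2).
Qed.

Lemma qcent x y : f x = 1 -> commute x y.
Proof.
move/qker_elt => [g N2g ->]; have [h Gh ->] := qsurj y.
have Gg := subsetP sN2G _ N2g.
have nN1g := subsetP nG1 _ Gg; have nN1h := subsetP nG1 _ Gh.
rewrite /commute -!subgM ?mem_quotient // -!morphM //.
by rewrite /= commgC coset_kerr // (subsetP hR) // mem_commg.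
Qed.

Lemma qexp x : f x = 1 -> x ^+ p = 1.
Proof.
move/qker_elt => [g N2g ->]; apply: subg_inj; rewrite sgvalX subgK ?mem_quotient ?(subsetP sN2G) //.
rewrite -morphX ?(subsetP nG1) ?(subsetP sN2G) //= coset_id ?hP //.
Qed.


Lemma step_formula :
  (himg p 2 (@qmap _ G N2 N2) - himg p 2 f + (himg p 1 (@qmap _ G N1 N1) - himg p 1 f))%N
  = (logn p #|G / N1| - logn p #|G / N2|)%N /\ (logn p #|G / N2| <= logn p #|G / N1|)%N.
Proof.
have nN1' := nN1; have nN2' := nN2.
rewrite (himg_formula p qM qsK (qmap_id nN1) (qmap_id nN2)).
rewrite (rank_K1_W pp qM qsK qcent qexp).
have e1 := card_subgT (G / N1)%G; have e2 := card_subgT (G / N2)%G.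
have := card_morph_sect qM qsK => H.
have -> : #|G / N1| = (#|('ker (fm qM))%G| * #|G / N2|)%N by rewrite -e1 -e2; exact: H.
rewrite lognM ?cardG_gt0 // addnK; split => //; exact: leq_addl.
Qed.

End Step.

End PS.
Import PS.

Module PT.
Set Implicit Arguments. Unset Strict Implicit. Unset Printing Implicit Defensive.
Import GRing.Theory.
Local Open Scope ring_scope.

Section Triv.
Variables (p : nat) (X T : finGroupType) (g : X -> T).
Hypothesis T1 : #|T| = 1%N.

Lemma T_all (a : T) : a = 1%g.
Proof.
have /card1P [x hx] : #|T| == 1%N by rewrite T1.
by move: (hx a) (hx 1%g); rewrite !inE => /esym/eqP -> /esym/eqP ->.
Qed.

Lemma gM : {morph g : x y / (x * y)%g}.
Proof. by move=> x y; rewrite !(T_all (g _)) mulg1. Qed.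

Lemma card_tupT n : #|{: tup T n}| = 1%N.
Proof. by rewrite card_ffun T1 exp1n. Qed.

Lemma bdT1_rank : \rank (bd p T 1) = 1%N.
Proof.
apply/eqP; rewrite eqn_leq; apply/andP; split.
  by apply: leq_trans (rank_leq_col _) _; rewrite card_tupT.
rewrite lt0n mxrank_eq0; apply/negP => /eqP h.
have := ev_bd2 p (1%g : T) 1%g; rewrite h mulmx0 mulg1 subrr add0r => /esym/eqP.
rewrite /ev; apply/negP; apply/eqP => /matrixP /(_ 0 (enum_rank (mk1 1%g))).
by rewrite !mxE !eqxx /= => /eqP; rewrite oner_eq0.
Qed.

Lemma himg1_triv : himg p 1 g = 0%N.
Proof.
rewrite /himg bdT1_rank; apply/eqP; rewrite subn_eq0.
by apply: leq_trans (rank_leq_col _) _; rewrite card_tupT.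
Qed.

Lemma himg2_triv : himg p 2 g = 0%N.
Proof.
rewrite /himg /=; apply/eqP; rewrite subn_eq0.
have Z0 : \rank (kermx (bd p X 1) *m mapmx p 2 g) = 0%N.
  have fr : row_free (bd p T 1) by rewrite /row_free bdT1_rank card_tupT.
  rewrite -(mxrankMfree _ fr) -mulmxA -bd_mapmx; last exact: gM.
  rewrite mulmxA mulmx_ker mul0mx.
  exact: mxrank0.
apply: leq_trans (mxrank_adds_leqif _ _) _; rewrite Z0 //.
Qed.

End Triv.

End PT.
Import PT.

Module PSer.
Set Implicit Arguments. Unset Strict Implicit. Unset Printing Implicit Defensive.
Local Open Scope group_scope.

Definition ent (A : seq (seq nat)) k l := nth 0%N (nth [::] A k) l.

Definition Phi (A1 A2 : seq (seq nat)) : nat :=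
  let m := size A1 in
  (\sum_(0 <= k < m.-1) (ent A2 k.+1 k.+1 - ent A2 k k.+1 + (ent A1 k k - ent A1 k k.+1))
   + ent A1 m.-1 m.-1)%N.

Lemma telescope (L a : nat -> nat) m :
  (forall k, k < m -> a k = L k - L k.+1 /\ L k.+1 <= L k)%N ->
  L 0%N = (\sum_(0 <= k < m) a k + L m)%N.
Proof.
elim: m => [|m IH] h; first by rewrite big_geq.
rewrite big_nat_recr //= -addnA; have [-> le] := h m (ltnSn m).
rewrite subnK // IH // => k lt; apply: h; exact: ltnW.
Qed.

Section Series.
Variables (p : nat) (gT : finGroupType) (G : {group gT}) (m : nat) (N : nat -> {group gT}).
Hypotheses (pp : prime p) (N0 : N 0 :=: 1) (Nm : N m :=: G)
  (nN : forall k, (k <= m)%N -> N k <| G)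
  (sN : forall k, (k < m)%N -> N k \subset N k.+1)
  (cN : forall k, (k < m)%N -> [~: N k.+1, G] \subset N k)
  (pN : forall k, (k < m)%N -> forall x, x \in N k.+1 -> x ^+ p \in N k).

Lemma ent_pmat n k l : (k < m)%N -> (l < m)%N ->
  ent (pmat p n G m N) k l = if (k <= l)%N then himg p n (@qmap _ G (N k) (N l)) else 0%N.
Proof. by move=> km lm; rewrite /ent /pmat !nth_mkseq. Qed.

Lemma size_pmat n : size (pmat p n G m N) = m.
Proof. by rewrite size_mkseq. Qed.

Lemma card_top : #|G / N m| = 1%N.
Proof. by rewrite quotientS1 ?cards1 // Nm. Qed.

Lemma series_logn : logn p #|G| = Phi (pmat p 1 G m N) (pmat p 2 G m N).
Proof.
pose L k := logn p #|G / N k|.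
pose a k := (himg p 2 (@qmap _ G (N k.+1) (N k.+1)) - himg p 2 (@qmap _ G (N k) (N k.+1))
  + (himg p 1 (@qmap _ G (N k) (N k)) - himg p 1 (@qmap _ G (N k) (N k.+1))))%N.
have hstep k : (k < m)%N -> a k = (L k - L k.+1)%N /\ (L k.+1 <= L k)%N.
  move=> km; apply: step_formula => //.
  - by apply: nN; apply: ltnW.
  - by apply: nN.
  - by apply: sN.
  - by apply: cN.
  - by apply: pN.
have tel := telescope hstep.
have L0 : L 0%N = logn p #|G|.
  by rewrite /L N0 card_quotient ?norms1 // indexg1.
have Lm : L m = 0%N by rewrite /L card_top logn1.
rewrite -L0 tel Lm addn0 /Phi size_pmat.
have [m0|mpos] := posnP m.
  by rewrite /ent /pmat m0 !big_geq.
rewrite -{1}(prednK mpos) big_nat_recr //=; congr (_ + _)%N.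
  apply: eq_big_nat => k /andP[_ km].
  have km' : (k < m)%N by apply: leq_trans km (leq_pred _).
  have k1m : (k.+1 < m)%N by rewrite -(prednK mpos) ltnS.
  by rewrite /a !ent_pmat // ltnSn leqnn leqnSn.
have mm : (m.-1 < m)%N by rewrite prednK.
have T1 := card_subgT (G / N m)%G; rewrite card_top in T1.
rewrite /a ent_pmat // leqnn prednK //.
by rewrite !himg2_triv // (himg1_triv p (@qmap _ G (N m.-1) (N m)) T1) !subn0 add0n.
Qed.

End Series.

End PSer.
Import PSer.

Module PLow.
Set Implicit Arguments. Unset Strict Implicit. Unset Printing Implicit Defensive.
Local Open Scope group_scope.

Section PowSet.
Variables (gT : finGroupType) (p : nat).

Lemma norm_powset (G L : {group gT}) : G \subset 'N(L) ->
  G \subset 'N([set x ^+ p | x in L]).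
Proof.
move=> nLG; apply/subsetP => g Gg; rewrite inE; apply/subsetP => y.
rewrite mem_conjg => /imsetP[x Lx e].
apply/imsetP; exists (x ^ g); first by rewrite memJ_norm ?(subsetP nLG).
by rewrite -conjXg -e conjgKV.
Qed.

Lemma powset_sub (L K : {group gT}) : (forall x, x \in L -> x ^+ p \in K) ->
  [set x ^+ p | x in L] \subset K.
Proof. by move=> h; apply/subsetP => _ /imsetP[x Lx ->]; apply: h. Qed.

End PowSet.

Section Lower.
Variables (p : nat) (gT : finGroupType) (G : {group gT}).
Hypotheses (pp : prime p) (pG : p.-group G).

Lemma lpcs_normal j : lpcs p G j <| G.
Proof.
elim: j => [|j IH]; first exact: normal_refl.
case/andP: IH => sLG nLG.
have sub : lpcs p G j.+1 \subset lpcs p G j.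
  rewrite /= gen_subG subUset commg_subl nLG /=.
  by apply: powset_sub => x Lx; rewrite groupX.
rewrite /normal (subset_trans sub sLG) /=.
by rewrite norms_gen // normsU ?commg_normr ?norm_powset.
Qed.

Lemma lpcsS j : lpcs p G j.+1 \subset lpcs p G j.
Proof.
case/andP: (lpcs_normal j) => _ nLG.
rewrite /= gen_subG subUset commg_subl nLG /=.
by apply: powset_sub => x Lx; rewrite groupX.
Qed.

Lemma lpcsR j : [~: lpcs p G j, G] \subset lpcs p G j.+1.
Proof. by rewrite /= sub_gen // subsetUl. Qed.

Lemma lpcsX j x : x \in lpcs p G j -> x ^+ p \in lpcs p G j.+1.
Proof.
move=> Lx; rewrite /=; apply: (subsetP (sub_gen (subsetUr _ _))).
by apply/imsetP; exists x.
Qed.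

Lemma lpcs_proper j : lpcs p G j :!=: 1 -> #|lpcs p G j.+1| < #|lpcs p G j|.
Proof.
move=> ntN; set N := lpcs p G j.
have nNG : N <| G := lpcs_normal j.
have sNG : N \subset G by case/andP: nNG.
have pN : p.-group N := pgroupS sNG pG.
have cN := card_pgroup pN.
have lg : 0 < logn p #|N|.
  rewrite lt0n; apply: contra ntN => /eqP l0.
  by rewrite trivg_card1 cN l0.
have [K [sKN nKG cK]] := normal_pgroup pG nNG (leq_pred (logn p #|N|)).
have nKG' : G \subset 'N(K) by case/andP: nKG.
have nKN : N \subset 'N(K) := subset_trans sNG nKG'.
have cNK : #|N / K| = p.
  rewrite card_quotient // -divgS // cK {1}cN -(prednK lg) expnS mulnK //.
  by rewrite expn_gt0 prime_gt0.
have sub : lpcs p G j.+1 \subset K.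
  rewrite /= gen_subG subUset; apply/andP; split.
    rewrite -quotient_cents2 //; apply: subset_trans (subsetIr (G / K) _).
    apply: prime_meetG; first by rewrite cNK.
    apply/negP => /eqP h.
    have e := TI_center_nil (quotient_nil K (pgroup_nil pG)) (quotient_normal K nNG) h.
    by move: (prime_gt1 pp); rewrite -cNK e cards1.
  apply: powset_sub => x Nx.
  have nx : x \in 'N(K) := subsetP nKN x Nx.
  apply: coset_idr; first exact: groupX.
  by rewrite morphX // -cNK expg_cardG // mem_quotient.
apply: leq_ltn_trans (subset_leq_card sub) _; rewrite cK {2}cN.
by rewrite ltn_exp2l ?prime_gt1 // prednK.
Qed.

Lemma lpcs_term : (lpcs p G #|G| :=: 1).
Proof.
have h j : (lpcs p G j == 1 :> {set gT}) || (j + #|lpcs p G j| <= #|G|)%N.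
  elim: j => [|j IH]; first by rewrite add0n leqnn orbT.
  case/orP: IH => [/eqP e|le].
    have s1 : lpcs p G j.+1 \subset [1] by apply: subset_trans (lpcsS j) _; rewrite e.
    by rewrite (trivgP s1) eqxx.
  case: eqP => //= ne; apply: leq_trans le; rewrite addSn -addnS leq_add2l.
  apply: lpcs_proper; apply/eqP => e.
  have s1 : lpcs p G j.+1 \subset [1] by apply: subset_trans (lpcsS j) _; rewrite e.
  by move: ne; rewrite (trivgP s1).
case/orP: (h #|G|) => [/eqP //| le]; exfalso; move: le.
rewrite -[X in _ <= X]addn0 leq_add2l leqn0 => /eqP e.
by move: (cardG_gt0 (lpcs p G #|G|)); rewrite e.
Qed.

Lemma m_low_spec : (lpcs p G (m_low p G) :=: 1).
Proof.
have hs : has (fun i => lpcs p G i :==: 1) (iota 0 #|G|.+1).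
  by apply/hasP; exists #|G|; rewrite ?mem_iota ?add0n ?ltnSn //= lpcs_term.
have := nth_find 0%N hs; rewrite -/(m_low p G) nth_iota ?add0n.
  by move/eqP.
by rewrite -(size_iota 0 #|G|.+1) -has_find.
Qed.

Lemma lower_logn : logn p #|G| =
  Phi (persistence p Lower 1 G) (persistence p Lower 2 G).
Proof.
set m := m_low p G.
apply: (@series_logn p gT G m (fun k0 => lpcs p G (m - k0))) => //.
- by rewrite subn0 m_low_spec.
- by rewrite subnn.
- by move=> k _; apply: lpcs_normal.
- by move=> k km; rewrite -(subnSK km) lpcsS.
- by move=> k km; rewrite -(subnSK km) lpcsR.
- by move=> k km x Nx; rewrite -(subnSK km) lpcsX.
Qed.

End Lower.

End PLow.
Import PLow.

Module PUp.
Set Implicit Arguments. Unset Strict Implicit. Unset Printing Implicit Defensive.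
Local Open Scope group_scope.

Section Upper.
Variables (p : nat) (gT : finGroupType) (G : {group gT}).
Hypotheses (pp : prime p) (pG : p.-group G).

Section Om.
Variable Z : {group gT}.
Definition Om := [set x in 'Z(G / Z) | x ^+ p == 1].

Lemma Om_group : group_set Om.
Proof.
apply/group_setP; split; first by apply/setIdP; split; [exact: group1 | rewrite expg1n].
move=> x y /setIdP[Zx /eqP xp] /setIdP[Zy /eqP yp]; apply/setIdP; split; first exact: groupM.
by rewrite expgMn ?xp ?yp ?mulg1 //; apply: (centsP (center_abelian (G / Z))).
Qed.

Lemma gen_Om : <<Om>> = Om.
Proof. exact: (gen_set_id Om_group). Qed.

Lemma Om_center : <<Om>> \subset 'Z(G / Z).
Proof. by rewrite gen_Om; apply/subsetP => x; rewrite inE => /andP[]. Qed.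

Lemma Om_exp x : x \in <<Om>> -> x ^+ p = 1.
Proof. by rewrite gen_Om inE => /andP[_ /eqP]. Qed.
End Om.

Lemma upcsE j : upcs p G j.+1 = coset (upcs p G j) @*^-1 <<Om (upcs p G j)>> :> {set gT}.
Proof. by []. Qed.

Lemma upcs_normal j : upcs p G j <| G.
Proof.
elim: j => [|j IH]; first exact: normal1.
have h : coset (upcs p G j) @*^-1 <<Om (upcs p G j)>> <| coset (upcs p G j) @*^-1 (G / upcs p G j).
  by rewrite cosetpre_normal sub_center_normal ?Om_center.
by rewrite quotientGK // in h.
Qed.

Lemma upcsS j : upcs p G j \subset upcs p G j.+1.
Proof. by rewrite upcsE; apply: subset_trans (ker_sub_pre _ _); rewrite ker_coset. Qed.

Lemma upcsR j : [~: upcs p G j.+1, G] \subset upcs p G j.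
Proof.
have [_ nZG] := andP (upcs_normal j).
rewrite -quotient_cents2 //; last by rewrite upcsE subsetIl.
rewrite upcsE cosetpreK; apply: subset_trans (Om_center _) (subsetIr _ _).
Qed.

Lemma upcsX j x : x \in upcs p G j.+1 -> x ^+ p \in upcs p G j.
Proof.
rewrite upcsE => /morphpreP[nx cx].
apply: coset_idr; first exact: groupX.
by rewrite morphX // Om_exp.
Qed.

Lemma upcs_proper j : upcs p G j :!=: G -> #|upcs p G j| < #|upcs p G j.+1|.
Proof.
move=> ne; set Z := upcs p G j.
have /andP[sZG nZG] : Z <| G := upcs_normal j.
have ntQ : G / Z != 1.
  apply: contra ne => /eqP e; rewrite eqEsubset sZG /=.
  by rewrite -quotient_sub1 // e.
have ntC : 'Z(G / Z) != 1.
  by rewrite (center_nil_eq1 (quotient_nil Z (pgroup_nil pG))).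
have pC : p.-group 'Z(G / Z) := pgroupS (center_sub _) (quotient_pgroup Z pG).
have [_ dC _] := pgroup_pdiv pC ntC.
have [z Cz oz] := Cauchy pp dC.
have Oz : z \in <<Om Z>>.
  by rewrite gen_Om; apply/setIdP; split => //; rewrite -oz expg_order.
have Qz : z \in G / Z := subsetP (center_sub _) z Cz.
have [g ng Gg ez] := morphimP Qz.
apply: proper_card; rewrite properE upcsS /=; apply/subsetPn; exists g.
  by rewrite upcsE; apply/morphpreP; split => //; rewrite -ez.
apply: contraL (prime_gt1 pp) => Zg.
by rewrite -oz ez /= coset_id // order1.
Qed.

Lemma upcs_term : (upcs p G #|G| :=: G).
Proof.
have sG j : upcs p G j \subset G by case/andP: (upcs_normal j).
have h j : (upcs p G j == G :> {set gT}) || (j < #|upcs p G j|)%N.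
  elim: j => [|j IH]; first by rewrite cardG_gt0 orbT.
  case/orP: IH => [/eqP e|lt].
    by rewrite eqEsubset sG -{1}e upcsS.
  case: eqP => //= ne; apply: leq_ltn_trans lt _; apply: upcs_proper; apply/eqP => e.
  by apply: ne; rewrite -upcsE; apply/eqP; rewrite eqEsubset sG /=; apply: subset_trans (upcsS j); rewrite e.
case/orP: (h #|G|) => [/eqP //|lt]; exfalso.
by move: (leq_trans lt (subset_leq_card (sG #|G|))); rewrite ltnn.
Qed.

Lemma m_up_spec : (upcs p G (m_up p G) :=: G).
Proof.
have hs : has (fun i => upcs p G i :==: G) (iota 0 #|G|.+1).
  by apply/hasP; exists #|G|; rewrite ?mem_iota ?add0n ?ltnSn //= upcs_term.
have := nth_find 0%N hs; rewrite -/(m_up p G) nth_iota ?add0n.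
  by move/eqP.
by rewrite -(size_iota 0 #|G|.+1) -has_find.
Qed.

Lemma upper_logn : logn p #|G| =
  Phi (persistence p Upper 1 G) (persistence p Upper 2 G).
Proof.
apply: (@series_logn p gT G (m_up p G) (fun k0 => upcs p G k0)) => //.
- exact: m_up_spec.
- by move=> k _; apply: upcs_normal.
- by move=> k _; apply: upcsS.
- by move=> k _; apply: upcsR.
- by move=> k _; apply: upcsX.
Qed.

End Upper.

End PUp.
Import PUp.

Theorem mainTheorem3 (p : nat) (hp : prime p) (F : pcseries)
    (gT gT' : finGroupType) (G : {group gT}) (G' : {group gT'}) :
  (p.-group G)%g -> (p.-group G')%g ->
  persistence p F 1 G = persistence p F 1 G' ->
  persistence p F 2 G = persistence p F 2 G' ->
  #|G| = #|G'|.
Proof.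
move=> pG pG' e1 e2.
have key : forall (aT : finGroupType) (H : {group aT}), (p.-group H)%g ->
    logn p #|H| = Phi (persistence p F 1 H) (persistence p F 2 H).
  by move=> aT H pH; case: F e1 e2 => _ _; [apply: lower_logn | apply: upper_logn].
by rewrite (card_pgroup pG) (card_pgroup pG') (key _ _ pG) (key _ _ pG') e1 e2.
Qed.
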